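(* Let $d,k\geq 2$ and $\epsilon\geq 1$, and let $G$ be a diregular $(d,k,+\epsilon)$-digraph. Then for every vertex $u$ of $G$, the multisets $O(N^+(u))$ and $N^+(O(u))$ are equal.
   Context: A digraph is $k$-geodetic if for every ordered pair of vertices $x,y$ there is at most one directed path from $x$ to $y$ of length at most $k$ (the trivial path of length $0$ counts). $M(d,k)=1+d+\dots+d^k$. A diregular $(d,k,+\epsilon)$-digraph is a $k$-geodetic digraph of order $M(d,k)+\epsilon$ in which every vertex has in-degree and out-degree exactly $d$. $N^+(x)$ is the set of out-neighbours of $x$; $d(x,y)$ is the directed distance; the outlier set of $x$ is $O(x)=\{y: d(x,y)\geq k+1\}$ (it has exactly $\epsilon$ elements). For a set $S$ of vertices, $N^+(S)$ denotes the multiset union $\biguplus_{x\in S}N^+(x)$ and $O(S)$ denotes the multiset union $\biguplus_{x\in S}O(x)$. *)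

(* Defs.v *)
From mathcomp Require Import all_boot.
Set Implicit Arguments. Unset Strict Implicit. Unset Printing Implicit Defensive.

(* A directed walk from x of length size p is a sequence p with path e x p;
   it ends at last x p.  The empty sequence is the trivial walk of length 0. *)

Definition k_geodetic (V : finType) (e : rel V) (k : nat) : Prop :=
  forall (x y : V) (p q : seq V),
    path e x p -> path e x q -> last x p = y -> last x q = y ->
    size p <= k -> size q <= k -> p = q.

Definition Moore (d k : nat) : nat := \sum_(i < k.+1) d ^ i.

Definition outN (V : finType) (e : rel V) (x : V) : {set V} := [set y | e x y].
Definition inN (V : finType) (e : rel V) (x : V) : {set V} := [set y | e y x].

Definition within (V : finType) (e : rel V) (k : nat) (x y : V) : bool :=
  [exists n : 'I_k.+1, exists t : n.-tuple V, path e x t && (last x t == y)].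

Definition outlier (V : finType) (e : rel V) (k : nat) (x : V) : {set V} :=
  [set y | ~~ within e k x y].

Definition diregular_dk_eps (V : finType) (e : rel V) (d k eps : nat) : Prop :=
  [/\ k_geodetic e k,
      #|V| = Moore d k + eps &
      forall x : V, #|outN e x| = d /\ #|inN e x| = d].

(* Main.v *)
Require Import Defs.
From mathcomp Require Import all_boot.
Set Implicit Arguments. Unset Strict Implicit. Unset Printing Implicit Defensive.

Section Aux.
Variable V : finType.

Lemma withinP (e : rel V) k x y :
  reflect (exists p, [/\ path e x p, last x p = y & size p <= k]) (within e k x y).
Proof.
apply: (iffP idP).
  case/existsP=> n /existsP [t /andP [h /eqP l]].
  by exists (val t); split => //; rewrite size_tuple -ltnS ltn_ord.
case=> p [h l s]; apply/existsP; exists (Ordinal (s : size p < k.+1)).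
by apply/existsP; exists (in_tuple p); rewrite h l eqxx.
Qed.

Lemma inj_card (A B : {set V}) (R : V -> V -> Prop) :
  (forall x, x \in A -> exists z, z \in B /\ R x z) ->
  (forall x x' z, x \in A -> x' \in A -> R x z -> R x' z -> x = x') ->
  #|A| <= #|B|.
Proof.
move=> ex inj.
have: forall x, exists z, x \in A -> z \in B /\ R x z.
  move=> x; case: (boolP (x \in A)) => xA; last by exists x.
  by have [z Hz] := ex x xA; exists z.
case/fin_all_exists=> f Hf.
rewrite -(card_in_imset (f := f) (D := A)).
  apply: subset_leq_card; apply/subsetP=> z /imsetP [x xA ->].
  by case: (Hf x xA).
move=> x x' xA x'A fe; apply: (inj x x' (f x)) => //.
  by case: (Hf x xA).
by rewrite fe; case: (Hf x' x'A).
Qed.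

Lemma count_split (A : {set V}) (b : pred V) :
  \sum_(x in A) (~~ b x : nat) = #|A| - #|[set x in A | b x]|.
Proof.
have H : \sum_(x in A) (~~ b x : nat) + \sum_(x in A) (b x : nat) = #|A|.
  rewrite -big_split /= -sum1_card; apply: eq_bigr => x _; by case: (b x).
have H2 : \sum_(x in A) (b x : nat) = #|[set x in A | b x]|.
  rewrite -sum1_card big_mkcond [in RHS]big_mkcond /=.
  apply: eq_bigr => x _; rewrite !inE; by case: (x \in A); case: (b x).
by rewrite -H2 -H addnK.
Qed.

Lemma hd_rcons (q : seq V) y : rcons q y = head y q :: behead (rcons q y).
Proof. by case: q. Qed.

End Aux.

Theorem lemma1 (V : finType) (e : rel V) (d k eps : nat) :
  2 <= d -> 2 <= k -> 1 <= eps ->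
  diregular_dk_eps e d k eps ->
  forall u y : V,
    \sum_(x in outN e u) (y \in outlier e k x : nat)
    = \sum_(x in outlier e k u) (y \in outN e x : nat).
Proof.
move=> _ _ _ [geo _ deg] u y.
have E1 : \sum_(x in outN e u) (y \in outlier e k x : nat)
   = \sum_(x in outN e u) (~~ within e k x y : nat).
  by apply: eq_bigr => x _; rewrite inE.
have E2 : \sum_(x in outlier e k u) (y \in outN e x : nat)
   = \sum_(x in inN e y) (~~ within e k u x : nat).
  rewrite big_mkcond [in RHS]big_mkcond /=; apply: eq_bigr => x _.
  by rewrite !inE; case: (within e k u x); case: (e x y).
rewrite E1 E2 !count_split (proj1 (deg u)) (proj2 (deg y)); congr (_ - _).
set SA := [set x in outN e u | within e k x y].
set SB := [set x in inN e y | within e k u x].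
pose R x z := exists q, [/\ path e u (rcons q y), size q <= k,
                          head y q = x & last u q = z].
apply/eqP; rewrite eqn_leq; apply/andP; split.
- apply: (inj_card (R := R)).
  + move=> x; rewrite !inE => /andP [eux /withinP [p [pp lp sp]]].
    have Hr : rcons (belast x p) y = x :: p by rewrite -lp -lastI.
    have Pq : path e u (rcons (belast x p) y) by rewrite Hr /= eux.
    exists (last u (belast x p)); split.
      rewrite !inE; apply/andP; split.
        by move: Pq; rewrite rcons_path => /andP [].
      apply/withinP; exists (belast x p); split => //.
        by move: Pq; rewrite rcons_path => /andP [].
      by rewrite size_belast.
    exists (belast x p); split => //; first by rewrite size_belast.
    by case: p pp lp sp Hr {Pq} => [|a p] //= _ ->.
  + move=> x x' z _ _ [q [pq sq hq lq]] [q' [pq' sq' hq' lq']].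
    rewrite -hq -hq'; congr head.
    move: pq pq'; rewrite !rcons_path => /andP [pq _] /andP [pq' _].
    exact: (geo u z q q' pq pq' lq lq' sq sq').
- apply: (inj_card (R := fun z x => R x z)).
  + move=> z; rewrite !inE => /andP [ezy /withinP [q [pq lq sq]]].
    have Pq : path e u (rcons q y) by rewrite rcons_path pq lq ezy.
    exists (head y q); split; last by exists q.
    rewrite !inE; move: Pq; rewrite hd_rcons /= => /andP [-> Pr] /=.
    apply/withinP; exists (behead (rcons q y)); split => //.
      by have := last_rcons u q y; rewrite hd_rcons.
    by rewrite size_behead size_rcons.
  + move=> z z' x _ _ [q [pq sq hq lq]] [q' [pq' sq' hq' lq']].
    rewrite -lq -lq'; congr last.
    apply: (@rcons_injl _ y).
    rewrite hd_rcons [in RHS]hd_rcons hq hq'; congr cons.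
    move: pq pq'; rewrite hd_rcons [in X in _ -> X]hd_rcons hq hq' /=.
    move=> /andP [_ p1] /andP [_ p2].
    apply: (geo x y _ _ p1 p2).
    * by have := last_rcons u q y; rewrite hd_rcons hq.
    * by have := last_rcons u q' y; rewrite hd_rcons hq'.
    * by rewrite size_behead size_rcons.
    * by rewrite size_behead size_rcons.
Qed.
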